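(* Let $z$ be an upper bound on the maximum degree of $\Gamma_X$ and $p_0=(8z)^{-2}$. If the bulk error $Z(\eta)\leftarrow\mathcal N(p)$ with $p<p_0$, then the probability that some maximal connected set of marked vertices in the subgraph of $\Gamma_X$ induced on its bulk vertices contains both a vertex of layer $2$ and a vertex of layer $2T$ (i.e. $1-\Pr[\mathsf{CC}_X]$) is at most $$m_x\,\frac{(p/p_0)^{T/2}}{1-\sqrt{p/p_0}}.$$
   Context: $Q=(H^X,H^Z)$ is a CSS code: full-rank $H^X\in\mathbb F_2^{m_x\times n}$, $H^Z\in\mathbb F_2^{m_z\times n}$ with $H^X(H^Z)^T=0$; write $i\sim c$ if qubit $i$ is in the support of check $c$. $Q$ is $\ell$-LDPC (rows of weight $\le\ell$, each qubit in $\le\ell$ checks). A random Pauli error $E$ is local stochastic of rate $p$, $E\leftarrow\mathcal N(p)$, if $\Pr[S\subseteq\mathrm{supp}(E)]\le p^{|S|}$ for every set $S$ of qubits. ATG: fix $T\ge1$; graph with code vertices $q_{i,t}$ ($i\in[n]$, $t\in[2T+1]$), Z-check vertices $z_{c,t}$ ($c\in[m_z]$, $t$ odd), X-check vertices $x_{c,t}$ ($c\in[m_x]$, $t$ even); edges $q_{i,t}q_{i,t+1}$, $q_{i,t}z_{c,t}$ ($t$ odd, $H^Z_{c,i}=1$), $q_{i,t}x_{c,t}$ ($t$ even, $H^X_{c,i}=1$). Boundary $\partial=\{q_{i,1},q_{i,2T+1}\}$, bulk $\mathcal B=$ all other vertices. Decoding setup. A Z-type bulk error is $\eta\in\{0,1\}^{\mathcal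 B}$ with components $P_t\in\{0,1\}^n$ (code vertices of layer $t$, $2\le t\le 2T$) and $B_t$ (check vertices of layer $t$). The meta-check vectors are the indicator vectors $\alpha\in\{0,1\}^{\mathcal B}$ of the sets $\{z_{c,t-1},z_{c,t+1}\}\cup\{q_{i,t}:i\sim c\}$ ($t$ even, $c\in[m_z]$) and $\{x_{c,t-1},x_{c,t+1}\}\cup\{q_{i,t}:i\sim c\}$ ($t$ odd, $3\le t\le 2T-1$, $c\in[m_x]$). The decoder outputs a minimum-Hamming-weight $\beta\in\{0,1\}^{\mathcal B}$ with $\alpha\cdot\beta=\alpha\cdot\eta\pmod 2$ for all meta-check vectors $\alpha$; $R_t,C_t$ denote the components of $\beta$ analogous to $P_t,B_t$. X syndrome adjacency graph $\Gamma_X$: vertex set $\{q_{i,t}: i\in[n], t\text{ odd in }[2T+1]\}\cup\{x_{c,t}:c\in[m_x], t\text{ even in }[2T]\}$; two distinct vertices are adjacent iff both lie in one of the sets $\{x_{c,t-1},x_{c,t+1}\}\cup\{q_{i,t}:i\sim c\}$ (odd $3\le t\le2T-1$), $\{x_{c,2}\}\cup\{q_{i,1}:i\sim c\}$, or $\{x_{c,2T}\}\cup\{q_{i,2T+1}:i\sim c\}$ ($c\in[m_x]$). Its boundary vertices are $q_{i,1},q_{i,2T+1}$; all others are its bulk vertices. Marking of bulk vertices: $q_{i,t}$ is marked iff $(P_t)_i\ne(R_t)_i$; $x_{c,t}$ is marked iff $(B_t)_c\ne(C_t)_c$. $\mathsf{CC}_X$ is the event that no maximal connected set of marked vertices in the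 subgraph of $\Gamma_X$ induced on its bulk vertices contains both a vertex of layer $2$ and a vertex of layer $2T$. *)

(* Defs.v *)
From HB Require Import structures.
From mathcomp Require Import all_boot all_order all_algebra.
Set Implicit Arguments. Unset Strict Implicit. Unset Printing Implicit Defensive.
Import Order.TTheory GRing.Theory Num.Theory.

(* "i ~ c" for an X-check c is  HX c i != 0, similarly for Z-checks.   *)

Definition css_code (n mx mz : nat) (HX : 'M['F_2]_(mx, n)) (HZ : 'M['F_2]_(mz, n)) :=
  [/\ \rank HX = mx, \rank HZ = mz & (HX *m HZ^T = 0)%R].

Definition ldpc (l n mx mz : nat) (HX : 'M['F_2]_(mx, n)) (HZ : 'M['F_2]_(mz, n)) :=
  [/\ forall c : 'I_mx, #|[set i : 'I_n | (HX c i != 0)%R]| <= l,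
      forall c : 'I_mz, #|[set i : 'I_n | (HZ c i != 0)%R]| <= l &
      forall i : 'I_n, #|[set c : 'I_mx | (HX c i != 0)%R]| + #|[set c : 'I_mz | (HZ c i != 0)%R]| <= l]%N.

(* Vertices of the ATG.  Layers t are natural numbers 1..2T+1, stored  *)
(* in 'I_(2T+2) (the value 0 is never a valid layer).                  *)
(*   inl (inl (i,t)) = q_{i,t},  inl (inr (c,t)) = z_{c,t},            *)
(*   inr (c,t)       = x_{c,t}.                                        *)
Definition vtx (n mx mz T : nat) : finType :=
  (('I_n * 'I_(T.*2.+2)) + ('I_mz * 'I_(T.*2.+2)) + ('I_mx * 'I_(T.*2.+2)))%type.

Section ATG.
Variables (n mx mz T : nat) (HX : 'M['F_2]_(mx, n)) (HZ : 'M['F_2]_(mz, n)).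
Local Notation V := (vtx n mx mz T).

Definition layer (v : V) : nat :=
  match v with inl (inl (_, t)) => t | inl (inr (_, t)) => t | inr (_, t) => t end.

Definition is_q (i : 'I_n) (t : nat) (v : V) : bool :=
  match v with inl (inl (i', t')) => (i' == i) && (t' == t :> nat) | _ => false end.
Definition is_z (c : 'I_mz) (t : nat) (v : V) : bool :=
  match v with inl (inr (c', t')) => (c' == c) && (t' == t :> nat) | _ => false end.
Definition is_x (c : 'I_mx) (t : nat) (v : V) : bool :=
  match v with inr (c', t') => (c' == c) && (t' == t :> nat) | _ => false end.

Definition atg_vertex (v : V) : bool :=
  match v with
  | inl (inl (_, t)) => 1 <= t
  | inl (inr (_, t)) => odd t
  | inr (_, t) => (0 < t) && ~~ odd t
  end%N.

Definition atg_bulk (v : V) : bool :=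
  atg_vertex v && ~~ [exists i : 'I_n, is_q i 1 v || is_q i T.*2.+1 v].

Definition Bulk : finType := {v : V | atg_bulk v}.

Definition valB (e : {ffun Bulk -> bool}) (v : V) : bool :=
  if insub v is Some b then e b else false.

Definition metaZ (c : 'I_mz) (t : nat) (v : V) : bool :=
  [|| is_z c t.-1 v, is_z c t.+1 v | [exists i : 'I_n, (HZ c i != 0)%R && is_q i t v]].
Definition metaX (c : 'I_mx) (t : nat) (v : V) : bool :=
  [|| is_x c t.-1 v, is_x c t.+1 v | [exists i : 'I_n, (HX c i != 0)%R && is_q i t v]].

Definition dotB (alpha : pred V) (e : {ffun Bulk -> bool}) : bool :=
  odd #|[set b : Bulk | alpha (val b) && e b]|.

Definition same_meta_syndrome (eta beta : {ffun Bulk -> bool}) : bool :=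
  [forall c : 'I_mz, forall t : 'I_(T.*2.+2),
     ((2 <= t <= T.*2) && ~~ odd t)%N ==> (dotB (metaZ c t) beta == dotB (metaZ c t) eta)]
  && [forall c : 'I_mx, forall t : 'I_(T.*2.+2),
     ((3 <= t <= T.*2 - 1) && odd t)%N ==> (dotB (metaX c t) beta == dotB (metaX c t) eta)].

Definition weightB (e : {ffun Bulk -> bool}) : nat := #|[set b | e b]|.

Definition min_weight_decoder (dec : {ffun Bulk -> bool} -> {ffun Bulk -> bool}) : Prop :=
  forall eta, same_meta_syndrome eta (dec eta) /\
    forall beta, same_meta_syndrome eta beta -> (weightB (dec eta) <= weightB beta)%N.

Definition gx_vertex (v : V) : bool :=
  match v with
  | inl (inl (_, t)) => odd t
  | inl (inr _) => false
  | inr (_, t) => (0 < t) && ~~ odd t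
  end.

Definition gx_set (c : 'I_mx) (t : nat) (v : V) : bool :=
  [|| ((3 <= t <= T.*2 - 1) && odd t)%N &&
        [|| is_x c t.-1 v, is_x c t.+1 v | [exists i : 'I_n, (HX c i != 0)%R && is_q i t v]],
      (t == 1)%N &&
        (is_x c 2 v || [exists i : 'I_n, (HX c i != 0)%R && is_q i 1 v]) |
      (t == T.*2.+1)%N &&
        (is_x c T.*2 v || [exists i : 'I_n, (HX c i != 0)%R && is_q i T.*2.+1 v])].

Definition gx_adj (u v : V) : bool :=
  [&& u != v, gx_vertex u, gx_vertex v &
      [exists c : 'I_mx, exists t : 'I_(T.*2.+2), gx_set c t u && gx_set c t v]].

Definition gx_bulk (v : V) : bool :=
  gx_vertex v && ~~ [exists i : 'I_n, is_q i 1 v || is_q i T.*2.+1 v].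

Definition marked (eta beta : {ffun Bulk -> bool}) (v : V) : bool :=
  gx_bulk v && (valB eta v != valB beta v).

Definition marked_rel (eta beta : {ffun Bulk -> bool}) : rel V :=
  fun u v => [&& gx_adj u v, marked eta beta u & marked eta beta v].

Definition not_CC_X (eta beta : {ffun Bulk -> bool}) : bool :=
  [exists u : V, exists v : V,
     [&& marked eta beta u, marked eta beta v, layer u == 2, layer v == T.*2
       & connect (marked_rel eta beta) u v]].

End ATG.

Definition is_distr (R : numDomainType) (Om : finType) (mu : {ffun Om -> R}) : Prop :=
  ((forall w, 0 <= mu w) /\ \sum_w mu w = 1)%R.

Definition prob (R : numDomainType) (Om : finType) (mu : {ffun Om -> R}) (E : pred Om) : R :=
  (\sum_(w | E w) mu w)%R.

Definition local_stochastic (R : numDomainType) (B : finType)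
    (mu : {ffun {ffun B -> bool} -> R}) (p : R) : Prop :=
  forall S : {set B}, (prob mu (fun e => S \subset [set b | e b]) <= p ^+ #|S|)%R.

(* Main.v *)
Require Import Defs.
From HB Require Import structures.
From mathcomp Require Import all_boot all_order all_algebra zify ring lra.
Set Implicit Arguments. Unset Strict Implicit. Unset Printing Implicit Defensive.
Import Order.TTheory GRing.Theory Num.Theory.

Section Graph.
Variables (V : finType) (e : rel V).
Hypothesis esym : symmetric e.

Definition restr (K : {set V}) : rel V := fun a b => [&& a \in K, b \in K & e a b].
Definition comp (D : {set V}) (u : V) : {set V} := [set w | connect (restr D) u w].
Definition conn_in (F C : {set V}) (v : V) : bool :=
  [&& v \in C, [disjoint C & F] & [forall w in C, connect (restr C) v w]].

Lemma restr_sym K : symmetric (restr K).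
Proof. by move=> a b; rewrite /restr esym; case: (a \in K); case: (b \in K). Qed.

Lemma last_in (D : {set V}) a p : a \in D -> path (restr D) a p -> last a p \in D.
Proof.
elim: p a => //= b p IH a aD /andP[/and3P[_ bD _] Hp]; exact: IH.
Qed.

Lemma conn_restr_mem (D : {set V}) a b : connect (restr D) a b -> a = b \/ (a \in D /\ b \in D).
Proof.
move/connectP=> [[|c p] /=]; first by move=> _ ->; left.
move=> /andP[/and3P[aD cD _] Hp] ->; right; split => //; exact: last_in Hp.
Qed.

Lemma comp_sub (D : {set V}) u : u \in D -> comp D u \subset D.
Proof.
move=> uD; apply/subsetP => w; rewrite inE => /conn_restr_mem [<-|[]] //.
Qed.

Lemma path_comp (D : {set V}) u a p :
  connect (restr D) u a -> path (restr D) a p -> path (restr (comp D u)) a p.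
Proof.
elim: p a => //= b p IH a ua /andP[Hab Hp].
move: (Hab) => /and3P[aD bD eab].
have ub : connect (restr D) u b by apply: connect_trans ua (connect1 Hab).
by rewrite (IH b ub Hp) andbT /restr !inE ua ub eab.
Qed.

Lemma comp_conn (D F : {set V}) u : u \in D -> [disjoint D & F] -> conn_in F (comp D u) u.
Proof.
move=> uD dDF; apply/and3P; split.
- by rewrite inE connect0.
- exact: disjointWl (comp_sub uD) dDF.
apply/forall_inP => w; rewrite inE => /connectP [p Hp ->].
apply/connectP; exists p => //.
exact: path_comp.
Qed.

Section Decomp.
Variables (F : {set V}) (v : V).
Let F' := v |: F.
Definition Nb := [set u | e v u && (u \notin F')].
Definition rep (C : {set V}) u :=
  [&& u \in Nb, u \in C & [forall w in Nb, (w \in comp (C :\ v) u) ==> (enum_rank u <= enum_rank w)%N]].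
Definition tC (C : {set V}) : {ffun V -> {set V}} :=
  [ffun u => if rep C u then comp (C :\ v) u else set0].
Definition Aset u : {set {set V}} :=
  if u \in Nb then [set s | (s == set0) || conn_in F' s u] else [set set0].

Variable C : {set V}.
Hypothesis HC : conn_in F C v.

Lemma rep_mem u : rep C u -> u \in C :\ v.
Proof.
case/and3P => /[!inE] /andP[_] /norP[uv _] uC _; by rewrite uv uC.
Qed.

Lemma tC_A u : tC C u \in Aset u.
Proof.
rewrite /tC ffunE /Aset; case: ifP => Hr; last first.
  by case: ifP => _; rewrite !inE eqxx.
have uN : u \in Nb by case/and3P: Hr.
rewrite uN inE; apply/orP; right; apply: comp_conn; first exact: rep_mem.
case/and3P: HC => _ dCF _.
rewrite disjoint_subset; apply/subsetP => x; rewrite /F' !inE => /andP[xv xC].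
by rewrite negb_or xv (disjointFr dCF xC).
Qed.

Lemma tC_sub u : tC C u \subset C :\ v.
Proof.
rewrite /tC ffunE; case: ifP => Hr; last exact: sub0set.
exact/comp_sub/rep_mem.
Qed.

Lemma comp_same (D : {set V}) a b w : w \in comp D a -> w \in comp D b -> b \in comp D a.
Proof.
rewrite !inE => aw bw; apply: connect_trans aw _.
by rewrite (sym_connect_sym (@restr_sym D)).
Qed.

Lemma tC_uniq w u1 u2 : w \in tC C u1 -> w \in tC C u2 -> u1 = u2.
Proof.
rewrite /tC !ffunE.
case H1: (rep C u1); last by rewrite inE.
case H2: (rep C u2); last by move=> _; rewrite inE.
move=> w1 w2.
have h21 := comp_same w1 w2; have h12 := comp_same w2 w1.
case/and3P: H1 => u1N _ /forall_inP /(_ _ (proj1 (andP H2))) /implyP /(_ h21) r12.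
case/and3P: H2 => u2N _ /forall_inP /(_ _ u1N) /implyP /(_ h12) r21.
apply: enum_rank_inj; apply: val_inj => /=; apply/eqP; rewrite eqn_leq r12 r21 //.
Qed.

Lemma path_split a p w : a \in C -> path (restr C) a p -> w = last a p -> w != v ->
  (exists2 u, (u \in C :\ v) && e v u & connect (restr (C :\ v)) u w)
  \/ (a != v /\ connect (restr (C :\ v)) a w).
Proof.
elim: p a => /= [|b p IH] a aC.
  by move=> _ -> av; right; split.
move=> /andP[/and3P[_ bC eab] Hp] wl wv.
case: (IH b bC Hp wl wv) => [|[bv cbw]]; first by left.
case: (eqVneq a v) => [av|av].
  by left; exists b => //; rewrite !inE bv bC -av eab.
right; split => //; apply: connect_trans cbw; apply: connect1.
by rewrite /restr !inE av bv aC bC eab.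
Qed.

Lemma tC_cover w : w \in C :\ v -> exists u, w \in tC C u.
Proof.
rewrite !inE => /andP[wv wC].
case/and3P: HC => vC dCF /forall_inP /(_ w wC) /connectP [p Hp wl].
case: (path_split vC Hp wl wv) => [[u0 /andP[u0Cv evu0] cu0w]|[]]; last by rewrite eqxx.
have u0N : u0 \in Nb.
  move: u0Cv; rewrite !inE => /andP[u0v u0C]; idtac.
  by rewrite evu0 (negbTE u0v) (disjointFr dCF u0C).
pose P := fun u => (u \in Nb) && (w \in comp (C :\ v) u).
have Pu0 : P u0 by rewrite /P u0N inE.
case: (arg_minnP (fun u => enum_rank u : nat) Pu0) => u /andP[uN wu] umin.
exists u; rewrite /tC ffunE.
suff -> : rep C u by [].
apply/and3P; split => //.
  by move: wu; rewrite inE => /conn_restr_mem [->|[/setD1P[_ ->] //]].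
apply/forall_inP => x xN; apply/implyP => ux.
apply: umin; rewrite /P xN /= inE; move: ux wu; rewrite !inE => ux wu.
apply: connect_trans _ wu; by rewrite (sym_connect_sym (@restr_sym _)).
Qed.

Lemma tC_card : (1 + \sum_u #|tC C u| <= #|C|)%N.
Proof.
case/and3P: HC => vC _ _.
rewrite (cardsD1 v C) vC leq_add2l.
have cardE' (A : {set V}) : #|A| = (\sum_w (w \in A : nat))%N.
  by rewrite -sum1_card big_mkcond /=; apply: eq_bigr => w _; case: (w \in A).
rewrite (eq_bigr (fun u => \sum_w (w \in tC C u : nat))%N); last by move=> u _; exact: cardE'.
rewrite exchange_big cardE' /=; apply: leq_sum => w _.
case: (boolP (w \in C :\ v)) => wC.
  have [u wu] := tC_cover wC.
  rewrite (bigD1 u) //= wu big1 // => u' u'u.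
  by case: (boolP (w \in tC C u')) => // wu'; move: u'u; rewrite (tC_uniq wu' wu) eqxx.
rewrite big1 // => u _; case: (boolP (w \in tC C u)) => // wu.
by move: wC; rewrite (subsetP (tC_sub u) _ wu).
Qed.

Lemma tC_eq : C = v |: \bigcup_u tC C u.
Proof.
case/and3P: HC => vC _ _.
apply/setP => w; rewrite !inE; case: (eqVneq w v) => [->|wv] //=.
apply/idP/bigcupP.
  move=> wC; have wCv : w \in C :\ v by rewrite !inE wv wC.
  by have [u wu] := tC_cover wCv; exists u.
by case=> u _ /(subsetP (tC_sub u)); rewrite !inE => /andP[].
Qed.

End Decomp.

Section Bound.
Local Open Scope ring_scope.
Variables (R : numDomainType) (a y : R) (z : nat).
Hypotheses (a0 : 0 <= a) (a1 : a <= 1) (y0 : 0 <= y) (Hay : a * (1 + y) ^+ z <= y)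
  (deg : forall v, (#|[set w | e v w]| <= z)%N).

Lemma sum_sub_le (I : finType) (P Q : pred I) (G : I -> R) :
  (forall i, P i -> Q i) -> (forall i, Q i -> 0 <= G i) ->
  \sum_(i | P i) G i <= \sum_(i | Q i) G i.
Proof.
move=> PQ G0; rewrite [X in X <= _]big_mkcond [X in _ <= X]big_mkcond /=.
apply: ler_sum => i _; case: (boolP (P i)) => Pi; first by rewrite PQ.
by case: (boolP (Q i)) => Qi //; exact: G0.
Qed.

Lemma sum_or_le (I : finType) (P Q : pred I) (G : I -> R) :
  (forall i, 0 <= G i) ->
  \sum_(i | P i || Q i) G i <= \sum_(i | P i) G i + \sum_(i | Q i) G i.
Proof.
move=> G0; rewrite !(big_mkcond (fun i => _ || _)) (big_mkcond P) (big_mkcond Q) -big_split /=.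
apply: ler_sum => i _; case: (P i); case: (Q i) => /=; rewrite ?addr0 ?add0r //.
by rewrite lerDl.
Qed.

Lemma conn_bound m : forall F v, (#|~: F| <= m)%N -> v \notin F ->
  \sum_(C | conn_in F C v) a ^+ #|C| <= y.
Proof.
elim: m => [|m IH] F v Hm vF.
  have : (0 < #|~: F|)%N by apply/card_gt0P; exists v; rewrite inE.
  by rewrite leqNgt in Hm; rewrite (negbTE Hm).
have IH' : forall u, u \in Nb F v -> \sum_(C | conn_in (v |: F) C u) a ^+ #|C| <= y.
  move=> u; rewrite inE => /andP[_ uF']; apply: IH => //.
  have -> : ~: (v |: F) = (~: F) :\ v by apply/setP => x; rewrite !inE negb_or.
  move: Hm; rewrite (cardsD1 v (~: F)) inE vF /=; by [].
pose G (f : {ffun V -> {set V}}) := a * \prod_u a ^+ #|f u|.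
have G0 f : 0 <= G f by rewrite /G mulr_ge0 // prodr_ge0 // => u _; exact: exprn_ge0.
apply: le_trans (_ : \sum_(C | conn_in F C v) G (tC F v C) <= _).
  apply: ler_sum => C HC; rewrite /G prodrXr -exprS.
  apply: ler_wiXn2l => //; rewrite -add1n; exact: tC_card.
have -> : \sum_(C | conn_in F C v) G (tC F v C) =
          \sum_(f in tC F v @: [set C | conn_in F C v]) G f.
  rewrite big_imset /=; first by apply: eq_bigl => C; rewrite inE.
  move=> C1 C2; rewrite !inE => H1 H2 Heq.
  by rewrite (tC_eq H1) (tC_eq H2) Heq.
apply: le_trans (_ : \sum_(f in family (fun u s => s \in Aset F v u)) G f <= _).
  apply: sum_sub_le => [f|f _ //].
  case/imsetP => C; rewrite inE => HC ->; apply/familyP => u; exact: tC_A.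
rewrite /G -mulr_sumr -(bigA_distr_big_dep (fun u s => s \in Aset F v u) (fun u (s : {set V}) => a ^+ #|s|)) /=.
apply: le_trans Hay; apply: ler_wpM2l => //.
apply: le_trans (_ : \prod_u (if u \in Nb F v then 1 + y else 1) <= _).
  apply: ler_prod => u _; apply/andP; split.
    by apply: sumr_ge0 => s _; exact: exprn_ge0.
  rewrite /Aset; case: ifP => uN; last by rewrite big_set1 cards0 expr0.
  apply: le_trans (_ : \sum_(s | (s == set0) || conn_in (v |: F) s u) a ^+ #|s| <= _).
    by apply: sum_sub_le => [s|s _]; [rewrite inE | exact: exprn_ge0].
  apply: le_trans (sum_or_le _ _ _) _ => [s|]; first exact: exprn_ge0.
  by rewrite big_pred1_eq cards0 expr0 lerD2l; exact: IH'.
rewrite -big_mkcond prodr_const /=.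
apply: ler_weXn2l; first by rewrite lerDl.
apply: leq_trans (deg v); apply: subset_leq_card; apply/subsetP => u.
by rewrite !inE => /andP[].
Qed.

End Bound.
End Graph.

Lemma card_sumE (B : finType) (P : pred B) : #|[set b | P b]| = \sum_b (P b : nat).
Proof. by rewrite -sum1_card big_mkcond /=; apply: eq_bigr => b _; rewrite inE; case: (P b). Qed.

Lemma card_xor (B : finType) (A x y : pred B) :
  #|[set b | A b && (x b (+) y b)]| + 2 * #|[set b | [&& A b, x b & y b]]| =
  #|[set b | A b && x b]| + #|[set b | A b && y b]|.
Proof.
rewrite !card_sumE big_distrr -!big_split /=; apply: eq_bigr => b _.
by case: (A b); case: (x b); case: (y b).
Qed.

Lemma odd_card_xor (B : finType) (A x y : pred B) :
  odd #|[set b | A b && (x b (+) y b)]| =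
  odd #|[set b | A b && x b]| (+) odd #|[set b | A b && y b]|.
Proof.
have := congr1 odd (card_xor A x y); rewrite oddD oddD mul2n odd_double addbF => ->.
by [].
Qed.

Lemma card_split (B : finType) (A x : pred B) :
  #|[set b | A b && x b]| + #|[set b | A b && ~~ x b]| = #|[set b | A b]|.
Proof.
rewrite !card_sumE -big_split /=; apply: eq_bigr => b _.
by case: (A b); case: (x b).
Qed.


Lemma card_xor1 (B : finType) (x y : pred B) :
  #|[set b | x b (+) y b]| + 2 * #|[set b | x b && y b]| = #|[set b | x b]| + #|[set b | y b]|.
Proof.
rewrite !card_sumE big_distrr -!big_split /=; apply: eq_bigr => b _.
by case: (x b); case: (y b).
Qed.

Section ATGfacts.
Variables (n mx mz T : nat) (HX : 'M['F_2]_(mx, n)) (HZ : 'M['F_2]_(mz, n)).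
Local Notation V := (vtx n mx mz T).
Local Notation BB := (Bulk n mx mz T).

Lemma gx_adj_sym : symmetric (@gx_adj n mx mz T HX).
Proof.
move=> a b; rewrite /gx_adj eq_sym.
have -> : [exists c, exists t : 'I_(T.*2.+2), gx_set HX c t a && gx_set HX c t b] =
          [exists c, exists t : 'I_(T.*2.+2), gx_set HX c t b && gx_set HX c t a].
  by apply: eq_existsb => c; apply: eq_existsb => t; rewrite andbC.
by case: (gx_vertex a); case: (gx_vertex b); rewrite ?andbF.
Qed.

Lemma gx_bulk_atg (w : V) : gx_bulk w -> atg_bulk w.
Proof.
rewrite /gx_bulk /atg_bulk => /andP[H1 ->]; rewrite andbT.
by case: w H1 => [[[i t]|[c t]]|[c t]] //=; case: (nat_of_ord t).
Qed.

Lemma valB_val (e : {ffun BB -> bool}) (b : BB) : valB e (val b) = e b.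
Proof. by rewrite /valB valK. Qed.

Lemma in_bulk (w : V) : gx_bulk w -> exists b : BB, val b = w.
Proof. by move/gx_bulk_atg => H; exists (Sub w H). Qed.

Lemma layer_x c k (w : V) : is_x c k w -> layer w = k.
Proof. by case: w => [[[i t]|[c' t]]|[c' t]] //= /andP[_ /eqP]. Qed.
Lemma layer_q i k (w : V) : is_q i k w -> layer w = k.
Proof. by case: w => [[[i' t]|[c' t]]|[c' t]] //= /andP[_ /eqP]. Qed.

Lemma gx_set_layer c t (w : V) : gx_set HX c t w -> (t.-1 <= layer w <= t.+1)%N.
Proof.
rewrite /gx_set => /or3P[/andP[_ /or3P[/layer_x->|/layer_x->|/existsP[i /andP[_ /layer_q->]]]]
                  |/andP[/eqP-> /orP[/layer_x->|/existsP[i /andP[_ /layer_q->]]]]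
                  |/andP[/eqP-> /orP[/layer_x->|/existsP[i /andP[_ /layer_q->]]]]] //=; lia.
Qed.

Lemma gx_adj_layer (a b : V) : gx_adj HX a b -> (layer b <= layer a + 2)%N.
Proof.
case/and4P => _ _ _ /existsP[c /existsP[t /andP[/gx_set_layer Ha /gx_set_layer Hb]]].
move: Ha Hb => /andP[h1 h2] /andP[h3 h4]; lia.
Qed.

End ATGfacts.

Section Component.
Variables (n mx mz T : nat) (HX : 'M['F_2]_(mx, n)) (HZ : 'M['F_2]_(mz, n)).
Local Notation V := (vtx n mx mz T).
Local Notation BB := (Bulk n mx mz T).
Definition egx : rel V := fun a b => [&& gx_adj HX a b, gx_bulk a & gx_bulk b].


Lemma metaZ_not_gx c (t : nat) (w : V) : ~~ odd t -> metaZ HZ c t w -> ~~ gx_vertex w.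
Proof.
move=> ot; case: w => [[[i' t']|[c' t']]|[c' t']] //=; rewrite /metaZ /=.
  by move=> /existsP[i /andP[_ /andP[_ /eqP ->]]].
by move=> /existsP[i]; rewrite andbF.
Qed.

Lemma metaX_gx c (t : 'I_(T.*2.+2)) (w : V) : ((3 <= t <= T.*2 - 1) && odd t)%N ->
  metaX HX c t w -> gx_bulk w && gx_set HX c t w.
Proof.
move=> ct Hm; have -> : gx_set HX c t w by rewrite /gx_set ct; move: Hm; rewrite /metaX => ->.
rewrite andbT; move: ct Hm => /andP[/andP[t3 t2] ot].
case: w => [[[i' t']|[c' t']]|[c' t']] //=; rewrite /metaX /=.
- move=> /existsP[i /and3P[_ _ /eqP tt]]; rewrite /gx_bulk /= tt ot /=.
  apply/negP => /existsP[j /orP[] /andP[_ /eqP h]]; lia.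
- by move=> /existsP[i]; rewrite andbF.
- have Hf : [exists i : 'I_n, (HX c i != 0%R) && false] = false.
    by apply: negbTE; apply/existsP => -[i]; rewrite andbF.
  rewrite Hf orbF => H; rewrite /gx_bulk /=.
  have -> : [exists i : 'I_n, false || false] = false by apply: negbTE; apply/existsP => -[].
  rewrite andbT; case/orP: H => /andP[_ /eqP ->].
    by case: (nat_of_ord t) t3 ot => [|[|tt]] //= _; rewrite negbK.
  by rewrite /= ot.
Qed.



Variables (eta beta : {ffun BB -> bool}) (u : V).
Hypothesis Hu : marked eta beta u.
Local Notation mr := (marked_rel HX eta beta).
Definition Ccomp : {set V} := [set w | connect mr u w].

Lemma marked_bulk w : marked eta beta w -> gx_bulk w.
Proof. by case/andP. Qed.

Lemma last_marked a p : marked eta beta a -> path mr a p -> marked eta beta (last a p).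
Proof. by elim: p a => //= b p IH a _ /andP[/and3P[_ _ mb] Hp]; exact: IH. Qed.

Lemma C_marked w : w \in Ccomp -> marked eta beta w.
Proof. by rewrite inE => /connectP[p Hp ->]; exact: last_marked. Qed.

Lemma C_marked' w : connect mr u w -> marked eta beta w.
Proof. by move=> h; apply: C_marked; rewrite inE. Qed.

Lemma C_conn : conn_in egx set0 Ccomp u.
Proof.
apply/and3P; split; first by rewrite inE connect0.
  by rewrite disjoint_subset; apply/subsetP => x; rewrite !inE.
apply/forall_inP => w; rewrite inE => /connectP[p Hp ->].
apply/connectP; exists p => //.
have : connect mr u u by [].
move: Hp; move: {-2}u => a.
elim: p a => //= b p IH a /andP[Hab Hp] ua.
have ub : connect mr u b by apply: connect_trans ua (connect1 Hab).
move: Hab => /and3P[adj ma mb].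
rewrite IH // andbT /restr !inE ua ub /egx adj.
by rewrite (marked_bulk ma) (marked_bulk mb).
Qed.

Lemma path_layer j a p : connect mr u a -> path mr a p -> (layer a <= j.*2.+1)%N ->
  (j.*2 <= layer (last a p))%N -> exists w, connect mr u w /\ (j.*2 <= layer w <= j.*2.+1)%N.
Proof.
elim: p a => /= [|b p IH] a ua.
  by move=> _ h1 h2; exists a; split => //; rewrite h1 h2.
move=> /andP[Hab Hp] h1 h2.
case: (leqP j.*2 (layer a)) => h.
  by exists a; split => //; rewrite h h1.
have ub : connect mr u b by apply: connect_trans ua (connect1 Hab).
apply: IH ub Hp _ h2.
move: Hab => /and3P[/gx_adj_layer hl _ _]; lia.
Qed.

Lemma C_big v : v \in Ccomp -> layer u = 2 -> layer v = T.*2 -> (T <= #|Ccomp|)%N.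
Proof.
move=> vC Lu Lv.
pose phi := fun w : V => (inord (layer w)./2 : 'I_T.+1).
have sub : [set j : 'I_T.+1 | (0 < j)%N] \subset phi @: Ccomp.
  apply/subsetP => j; rewrite inE => j0.
  move: vC; rewrite inE => /connectP[p Hp Hv].
  have jT : (j <= T)%N by rewrite -ltnS ltn_ord.
  have [w [uw Hw]] := @path_layer j u p (connect0 _ _) Hp
     ltac:(rewrite Lu; lia) ltac:(rewrite -Hv Lv; lia).
  apply/imsetP; exists w; first by rewrite inE.
  have hh : (layer w)./2 = j.
    case/andP: Hw => h1 h2.
    have [->|->] : layer w = j.*2 \/ layer w = j.*2.+1 by lia.
      by rewrite doubleK.
    by rewrite /= uphalf_double.
  by rewrite /phi hh inord_val.
have hc : #|[set j : 'I_T.+1 | (0 < j)%N]| = T.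
  have -> : [set j : 'I_T.+1 | (0 < j)%N] = [set~ ord0].
    by apply/setP => j; rewrite !inE lt0n.
  by rewrite cardsC1 card_ord.
rewrite -{1}hc; apply: leq_trans (subset_leq_card sub) _; exact: leq_imset_card.
Qed.

Hypothesis Hsyn : same_meta_syndrome HX HZ eta beta.
Definition beta' : {ffun BB -> bool} := [ffun b : BB => beta b (+) (val b \in Ccomp)].

Lemma dotB_flip (alpha : pred V) :
  dotB alpha beta' = dotB alpha beta (+) odd #|[set b : BB | alpha (val b) && (val b \in Ccomp)]|.
Proof.
rewrite /dotB.
have -> : [set b | alpha (val b) && beta' b] =
          [set b : BB | alpha (val b) && (beta b (+) (val b \in Ccomp))].
  by apply/setP => b; rewrite /beta' !inE ffunE !inE.
exact: (odd_card_xor (fun b : BB => alpha (val b)) (fun b : BB => beta b) (fun b : BB => val b \in Ccomp)).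
Qed.

Lemma syn_flip : same_meta_syndrome HX HZ eta beta'.
Proof.
case/andP: Hsyn => Hz Hx; apply/andP; split.
- apply/forallP => c; apply/forallP => t; apply/implyP => ct.
  move/forallP/(_ c)/forallP/(_ t)/implyP/(_ ct): Hz.
  rewrite dotB_flip.
  have -> : [set b : BB | metaZ HZ c t (val b) && (val b \in Ccomp)] = set0.
    apply/setP => b; rewrite !inE; apply/negP => /andP[hm hC].
    have := marked_bulk (C_marked' hC); case/andP => gv _.
    by move: (metaZ_not_gx (proj2 (andP ct)) hm); rewrite gv.
  by rewrite cards0 addbF.
- apply/forallP => c; apply/forallP => t; apply/implyP => ct.
  move/forallP/(_ c)/forallP/(_ t)/implyP/(_ ct): Hx => Heq.
  rewrite dotB_flip.
  case: (boolP [exists b : BB, metaX HX c t (val b) && (val b \in Ccomp)]); last first.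
    move=> nE.
    have -> : [set b : BB | metaX HX c t (val b) && (val b \in Ccomp)] = set0.
      apply/setP => b; rewrite !inE; apply/negP => H; move/negP: nE; apply.
      by apply/existsP; exists b; rewrite inE.
    by rewrite cards0 addbF.
  case/existsP => b0 /andP[hm0 hC0].
  have hC0' : connect mr u (val b0) by rewrite inE in hC0.
  have -> : [set b : BB | metaX HX c t (val b) && (val b \in Ccomp)] =
            [set b : BB | metaX HX c t (val b) && (eta b (+) beta b)].
    apply/setP => b; rewrite !inE; apply/andP/andP => [][hm hb]; split => //.
      move: (C_marked' hb); rewrite /marked !valB_val => /andP[_].
      by case: (eta b); case: (beta b).
    have mb : marked eta beta (val b).
      rewrite /marked !valB_val (proj1 (andP (metaX_gx ct hm))) /=.
      by move: hb; case: (eta b); case: (beta b).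
    have m0 := C_marked' hC0'.
    case: (eqVneq (val b0) (val b)) => [<-|neq] //.
    have gb := metaX_gx ct hm; have g0 := metaX_gx ct hm0.
    have adj : gx_adj HX (val b0) (val b).
      rewrite /gx_adj neq.
      case/andP: g0 => /andP[-> _] s0; case/andP: gb => /andP[-> _] sb /=.
      by apply/existsP; exists c; apply/existsP; exists t; rewrite s0 sb.
    have mrel : mr (val b0) (val b) by rewrite /marked_rel adj m0 mb.
    exact: connect_trans hC0' (connect1 mrel).
  rewrite (odd_card_xor (fun b : BB => metaX HX c t (val b)) eta beta).
  move: Heq; rewrite /dotB => /eqP ->.
  by case: (odd _).
Qed.

Hypothesis Hmin : forall b', same_meta_syndrome HX HZ eta b' -> (weightB beta <= weightB b')%N.

Lemma C_half : (#|Ccomp| <= 2 * #|Ccomp :&: [set w | valB eta w]|)%N.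
Proof.
have Hw := Hmin syn_flip; rewrite /weightB in Hw.
pose Cb := fun b : BB => val b \in Ccomp.
have e1 : [set b | beta' b] = [set b | beta b (+) Cb b] by apply/setP => b; rewrite /beta' !inE ffunE.
have h1 := card_xor1 beta Cb.
have h2 := card_split Cb beta.
have e2 : [set b | Cb b && ~~ beta b] = [set b | Cb b && eta b].
  apply/setP => b; rewrite !inE /Cb; case: (boolP (val b \in Ccomp)) => //= hb.
  move: (C_marked hb); rewrite /marked !valB_val => /andP[_].
  by case: (eta b); case: (beta b).
have e3 : [set b | beta b && Cb b] = [set b | Cb b && beta b] by apply/setP => b; rewrite !inE andbC.
rewrite e2 in h2; rewrite e3 in h1; rewrite e1 in Hw.
have k1 : (#|Ccomp| <= #|[set b | Cb b]|)%N.
  have sub : Ccomp \subset val @: [set b | Cb b].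
    apply/subsetP => w hw; have [b hb] := in_bulk (marked_bulk (C_marked hw)).
    by apply/imsetP; exists b; rewrite // inE /Cb hb.
  apply: leq_trans (subset_leq_card sub) _; exact: leq_imset_card.
have k2 : (#|[set b | Cb b && eta b]| <= #|Ccomp :&: [set w | valB eta w]|)%N.
  rewrite -(card_imset _ val_inj); apply: subset_leq_card; apply/subsetP => w.
  case/imsetP => b; rewrite inE => /andP[hb he] ->.
  rewrite in_setI; apply/andP; split; [exact: hb | by rewrite inE valB_val].
lia.
Qed.
End Component.

Local Open Scope ring_scope.

Lemma prob_mono (R : numDomainType) (Om : finType) (mu : {ffun Om -> R}) (A B : pred Om) :
  (forall w, 0 <= mu w) -> (forall w, A w -> B w) -> prob mu A <= prob mu B.
Proof. by move=> mu0 AB; apply: sum_sub_le. Qed.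

Lemma prob_union (R : numDomainType) (Om I : finType) (mu : {ffun Om -> R})
  (A : pred Om) (P : pred I) (E : I -> pred Om) :
  (forall w, 0 <= mu w) -> (forall w, A w -> exists2 i, P i & E i w) ->
  prob mu A <= \sum_(i | P i) prob mu (E i).
Proof.
move=> mu0 HA; rewrite /prob.
apply: le_trans (_ : \sum_(w | A w) \sum_(i | P i && E i w) mu w <= _).
  apply: ler_sum => w Aw; have [i Pi Ei] := HA w Aw.
  rewrite (bigD1 i) /=; last by rewrite Pi Ei.
  by rewrite lerDl; apply: sumr_ge0 => ? _.
apply: le_trans (_ : \sum_w \sum_(i | P i && E i w) mu w <= _).
  apply: sum_sub_le => // w _; exact: sumr_ge0.
under eq_bigr do rewrite big_mkcondr.
rewrite exchange_big /=; apply: ler_sum => i _.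
by rewrite [X in _ <= X]big_mkcond.
Qed.

Lemma bern (R : realDomainType) (y : R) m : 0 <= y -> (1 + y) ^+ m * (1 - m%:R * y) <= 1.
Proof.
move=> y0; elim: m => [|m IH]; first by rewrite expr0 mul0r subr0 mulr1.
apply: le_trans IH.
have X0 : 0 <= (1 + y) ^+ m by apply: exprn_ge0; rewrite addr_ge0.
have h : 0 <= (m%:R + 1) * y ^+ 2 by apply: mulr_ge0; [apply: addr_ge0 | exact: exprn_ge0].
have -> : (1 + y) ^+ m.+1 * (1 - m.+1%:R * y) = (1+y)^+m * ((1+y) * (1 - m.+1%:R*y)).
  by rewrite exprS; ring.
rewrite ler_wpM2l // -natr1; nra.
Qed.

Lemma layer2_x (n mx mz T : nat) (u : vtx n mx mz T) : gx_vertex u -> layer u = 2%N ->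
  exists c : 'I_mx, u = inr (c, inord 2).
Proof.
case: u => [[[i t]|[c t]]|[c t]] //=.
  by move=> ot lt; rewrite lt in ot.
move=> _ lt; exists c; congr (inr (c, _)); apply: val_inj => /=.
have h2 : (2 < T.*2.+2)%N by rewrite -lt ltn_ord.
by rewrite inordK.
Qed.

Theorem lemma5p2 (R : rcfType) (n mx mz T l : nat)
    (HX : 'M['F_2]_(mx, n)) (HZ : 'M['F_2]_(mz, n))
    (Hcss : css_code HX HZ) (Hldpc : ldpc l HX HZ) (HT : (1 <= T)%N)
    (z : nat)
    (Hz : forall v : vtx n mx mz T, gx_vertex v ->
            (#|[set w | gx_adj HX v w]| <= z)%N)
    (dec : {ffun Bulk n mx mz T -> bool} -> {ffun Bulk n mx mz T -> bool})
    (Hdec : min_weight_decoder HX HZ dec)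
    (mu : {ffun {ffun Bulk n mx mz T -> bool} -> R}) (p : R)
    (Hmu : is_distr mu) (Hp0 : 0 <= p) (Hls : local_stochastic mu p) :
  let p0 : R := ((8 * z)%:R ^+ 2)^-1 in
  p < p0 ->
  prob mu (fun eta => not_CC_X HX eta (dec eta))
    <= mx%:R * (Num.sqrt (p / p0)) ^+ T / (1 - Num.sqrt (p / p0)).
Proof.
move=> p0 Hp.
have mu0 : forall w, 0 <= mu w by case: Hmu.
have z0 : (0 < z)%N.
  case: (posnP z) => [z0'|//]; move: Hp; rewrite /p0 z0' muln0 expr0n /= invr0 => Hp.
  by move: (le_lt_trans Hp0 Hp); rewrite ltxx.
pose zR : R := z%:R.
have zR0 : 0 < zR by rewrite ltr0n.
have zR1 : 1 <= zR by rewrite ler1n.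
pose K : R := 8 * zR.
have KE : (8 * z)%:R = K by rewrite natrM.
have K1 : 1 <= K by rewrite /K; lra.
have p0E : p0 = (K ^+ 2)^-1 by rewrite /p0 KE.
pose s := Num.sqrt p.
have s0 : 0 <= s by exact: sqrtr_ge0.
have ss : s ^+ 2 = p by exact: sqr_sqrtr.
pose r := Num.sqrt (p / p0).
have rE : r = s * K.
  by rewrite /r p0E invrK sqrtrM // sqrtr_sqr ger0_norm // ltW // (lt_le_trans ltr01 K1).
have hpK : p * K ^+ 2 < 1.
  have K2 : 0 < K ^+ 2 by rewrite exprn_gt0 // (lt_le_trans ltr01 K1).
  by move: Hp; rewrite p0E -(ltr_pM2r K2) mulVf // gt_eqF.
have r0 : 0 <= r by exact: sqrtr_ge0.
have rK2 : (s * K) ^+ 2 < 1 by rewrite exprMn ss.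
have r1 : r < 1 by rewrite rE; nra.
have s1 : s <= 1 by nra.
have p1 : p <= 1 by rewrite -ss; nra.
fold r.
pose a : R := (4 * zR)^-1.
pose y : R := (2 * zR)^-1.
have a0 : 0 <= a by rewrite /a invr_ge0; lra.
have a1 : a <= 1 by rewrite /a invf_le1; lra.
have y0 : 0 <= y by rewrite /y invr_ge0; lra.
have Hay : a * (1 + y) ^+ z <= y.
  have hb := bern z y0; fold zR in hb.
  have hzy : 1 - zR * y = 2^-1 by rewrite /y; field; rewrite gt_eqF.
  rewrite hzy in hb.
  have h2 : (1 + y) ^+ z <= 2 by lra.
  have ya : y = a * 2 by rewrite /a /y; field; rewrite gt_eqF.
  by apply: le_trans (_ : a * 2 <= _); [rewrite ler_wpM2l | rewrite ya].
have esym : symmetric (@egx n mx mz T HX).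
  move=> u v; rewrite /egx /= gx_adj_sym.
  by case: (gx_bulk u); case: (gx_bulk v); rewrite ?andbF.
have deg : forall v, (#|[set w | @egx n mx mz T HX v w]| <= z)%N.
  move=> v; case: (boolP (gx_bulk v)) => gv.
    apply: leq_trans (Hz _ (proj1 (andP gv))); apply: subset_leq_card.
    by apply/subsetP => w; rewrite !inE => /andP[].
  have -> : [set w | @egx n mx mz T HX v w] = set0.
    by apply/setP => w; rewrite !inE /egx (negbTE gv) andbF.
  by rewrite cards0.
have Gb : forall v, \sum_(C | conn_in (@egx n mx mz T HX) set0 C v) a ^+ #|C| <= y.
  move=> v; apply: (conn_bound esym a0 a1 y0 Hay deg (m := #|~: set0|)) => //.
  by rewrite inE.
pose V := vtx n mx mz T.
pose xv := fun c : 'I_mx => (inr (c, inord 2) : V).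
pose Pi := fun i : 'I_mx * ({set V} * {set V}) =>
  [&& conn_in (@egx n mx mz T HX) set0 i.2.1 (xv i.1), (T <= #|i.2.1|)%N,
      i.2.1 \subset [set w | gx_bulk w], i.2.2 \subset i.2.1
    & (#|i.2.1| <= 2 * #|i.2.2|)%N].
pose E := fun (i : 'I_mx * ({set V} * {set V})) (eta : {ffun Bulk n mx mz T -> bool}) =>
  i.2.2 \subset [set w | valB eta w].
apply: le_trans (prob_union (P := Pi) (E := E) mu0 _) _.
  move=> eta /existsP[u /existsP[v /and5P[mu' mv lu lv cuv]]].
  have [Hsyn Hmin] := Hdec eta.
  have [c uE] := layer2_x (proj1 (andP (marked_bulk mu'))) (eqP lu).
  exists (c, (Ccomp HX eta (dec eta) u, Ccomp HX eta (dec eta) u :&: [set w | valB eta w])).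
    rewrite /Pi /xv /= -uE C_conn.
    rewrite (C_big mu' (v := v)) ?inE // ?(eqP lu) ?(eqP lv) //=.
    rewrite subsetIl (C_half mu' Hsyn Hmin) !andbT.
    by apply/subsetP => w /(C_marked mu'); rewrite inE => /andP[].
  by rewrite /E /= subsetIr.
apply: le_trans (_ : \sum_(i | Pi i) p ^+ #|i.2.2| <= _).
  apply: ler_sum => i /and5P[_ _ hCb hSC _].
  pose S' := [set b : Bulk n mx mz T | val b \in i.2.2].
  apply: le_trans (@prob_mono _ _ mu (E i) (fun eta => S' \subset [set b | eta b]) mu0 _) _.
    move=> eta /subsetP HS; apply/subsetP => b; rewrite !inE => /HS.
    by rewrite inE valB_val.
  apply: le_trans (Hls S') _; apply: ler_wiXn2l => //.
  have sub : i.2.2 \subset val @: S'.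
    apply/subsetP => w hw.
    have gw : gx_bulk w by move: (subsetP hCb w (subsetP hSC w hw)); rewrite inE.
    have [b hb] := in_bulk gw.
    by apply/imsetP; exists b; [rewrite inE hb | rewrite hb].
  apply: leq_trans (subset_leq_card sub) _; exact: leq_imset_card.
have -> : \sum_(i | Pi i) p ^+ #|i.2.2| = \sum_c \sum_(j | Pi (c, j)) p ^+ #|j.2|.
  by rewrite pair_big_dep /=; apply: eq_big => [[c j]|[c j] _].
apply: le_trans (_ : \sum_(c < mx) r ^+ T * y <= _); last first.
  rewrite sumr_const card_ord -[_ *+ mx]mulr_natl -mulrA ler_wpM2l // ler_wpM2l ?exprn_ge0 //.
  apply: le_trans (_ : 1 <= _); first by rewrite /y invf_le1; lra.
  by rewrite invf_ge1; lra.
apply: ler_sum => c _.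
have -> : \sum_(j | Pi (c, j)) p ^+ #|j.2| =
          \sum_(C : {set V}) \sum_(S | Pi (c, (C, S))) p ^+ #|S|.
  by rewrite pair_big_dep /=; apply: eq_big => [[C S]|[C S] _].
pose Q := fun C : {set V} => conn_in (@egx n mx mz T HX) set0 C (xv c) && (T <= #|C|)%N.
apply: le_trans (_ : \sum_(C : {set V}) (if Q C then (2 * s) ^+ #|C| else 0) <= _).
  apply: ler_sum => C _; case: ifP => QC.
    apply: le_trans (_ : \sum_(S | Pi (c, (C, S))) s ^+ #|C| <= _).
      apply: ler_sum => S /and5P[_ _ _ _ hCS].
      by rewrite -ss -exprM; apply: ler_wiXn2l.
    apply: le_trans (_ : \sum_(S in powerset C) s ^+ #|C| <= _).
      apply: sum_sub_le => [S /and5P[_ _ _ hSC _]|S _]; [by rewrite powersetE | exact: exprn_ge0].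
    by rewrite sumr_const card_powerset -[_ *+ (2 ^ _)%N]mulr_natl natrX -exprMn.
  rewrite big_pred0 // => S; apply/negbTE; apply: contraFN QC => /and5P[h1 h2 _ _ _].
  by rewrite /Q h1 h2.
rewrite -big_mkcond /=.
have h2s : 2 * s = r * a by rewrite rE /K /a; field; rewrite gt_eqF.
apply: le_trans (_ : \sum_(C | Q C) r ^+ T * a ^+ #|C| <= _).
  apply: ler_sum => C /andP[_ hT]; rewrite h2s exprMn ler_wpM2r ?exprn_ge0 //.
  by apply: ler_wiXn2l => //; exact: ltW.
apply: le_trans (_ : \sum_(C | conn_in (@egx n mx mz T HX) set0 C (xv c)) r ^+ T * a ^+ #|C| <= _).
  apply: sum_sub_le => [C /andP[] //|C _]; by rewrite mulr_ge0 ?exprn_ge0.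
by rewrite -mulr_sumr ler_wpM2l ?exprn_ge0 ?Gb.
Qed.
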